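(* Let $(E,\mathcal{P})$ be a random locally convex module over $K$ with base $(\Omega,\mathcal{F},P)$, where $(\Omega,\mathcal{F},P)$ is nonatomic. If $f:E\to L^0(\mathcal F,K)$ is a module homomorphism that is continuous from $(E,\mathcal{T}_{\varepsilon,\lambda})$ to $(L^{0}(\mathcal{F},K),\mathcal{T}_{c})$ (i.e. $f\in E^\ast_{min}$), then $f(x)=0$ for all $x\in E$.
   Context: $(\Omega,\mathcal{F},P)$ is a probability space, $K=\mathbb{R}$ or $\mathbb{C}$, and $L^{0}(\mathcal{F},K)$ is the algebra of equivalence classes (modulo a.s. equality) of $K$-valued measurable random variables. $L^0(\mathcal F,\mathbb R)$ is ordered by $\xi\le\eta$ iff $\xi^0\le\eta^0$ a.s.; $L^{0}_{+}=\{\xi\ge 0\}$, $L^{0}_{++}=\{\xi: \xi>0 \text{ a.s. on }\Omega\}$. An $L^0$-seminorm on a left $L^0(\mathcal F,K)$-module $E$ is a map $\|\cdot\|:E\to L^0_+$ with $\|x+y\|\le\|x\|+\|y\|$ and $\|\xi x\|=|\xi|\,\|x\|$ for all $\xi\in L^0(\mathcal F,K)$. A random locally convex module $(E,\mathcal P)$ is a left $L^0(\mathcal F,K)$-module $E$ with a family $\mathcal P$ of $L^0$-seminorms such that $\bigvee\{\|x\|:\|\cdot\|\in\mathcal P\}=0$ implies $x=0$. For finite $\mathcal Q\subset\mathcal P$, $\|x\|_{\mathcal Q}=\bigvee_{\|\cdot\|\in\mathcal Q}\|x\|$. The $(\varepsilon,\lambda)$-topology $\mathcal T_{\varepsilon,\lambda}$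 on $E$ has local base at $0$ the sets $\{x: P\{\omega:\|x\|_{\mathcal Q}(\omega)<\varepsilon\}>1-\lambda\}$, $\mathcal Q$ finite, $\varepsilon>0$, $0<\lambda<1$. The locally $L^0$-convex topology $\mathcal T_c$: $G$ is open iff for every $x\in G$ there are finite $\mathcal Q\subset\mathcal P$ and $\varepsilon\in L^0_{++}$ with $x+\{y:\|y\|_{\mathcal Q}\le\varepsilon\}\subset G$. $L^0(\mathcal F,K)$ is regarded as a random locally convex module with $\mathcal P=\{|\cdot|\}$. A probability space is nonatomic if it has no atom, where an atom is $A\in\mathcal F$ with $P(A)>0$ such that every measurable $B\subset A$ has $P(B)=0$ or $P(A\setminus B)=0$. *)

(* Defs.v *)
From HB Require Import structures.
From mathcomp Require Import all_boot all_order all_algebra.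
From mathcomp Require Import all_classical all_reals all_analysis.
From mathcomp Require Import complex.
From Stdlib Require List.

Set Implicit Arguments.
Unset Strict Implicit.
Unset Printing Implicit Defensive.

Import Order.TTheory GRing.Theory Num.Theory.
Local Open Scope classical_set_scope.
Local Open Scope ring_scope.

Inductive scalarK := KReal | KComplex.

Definition Kt (R : realType) (k : scalarK) : numFieldType :=
  match k with KReal => (R : numFieldType) | KComplex => (R[i] : numFieldType) end.

Definition Knorm (R : realType) (k : scalarK) : Kt R k -> R :=
  match k return Kt R k -> R with
  | KReal => fun x => `|x|
  | KComplex => fun z => complex.Re (`|z| : R[i])
  end.

Section Defs.
Context (R : realType) (d : measure_display) (T : measurableType d)
        (P : probability T R) (k : scalarK).

Local Notation K := (Kt R k).

Definition Kmeas : (T -> K) -> Prop :=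
  match k return (T -> Kt R k) -> Prop with
  | KReal => fun xi => measurable_fun setT xi
  | KComplex => fun xi => measurable_fun setT (fun w => complex.Re (xi w : R[i])) /\
                           measurable_fun setT (fun w => complex.Im (xi w : R[i]))
  end.

(* Elements of L^0(F,K) are represented by measurable functions T -> K,
   everything being understood modulo P-a.s. equality. *)

Definition L0_module (E : zmodType) (act : (T -> K) -> E -> E) : Prop :=
  [/\ (forall xi x y, Kmeas xi -> act xi (x + y) = act xi x + act xi y),
      (forall xi eta x, Kmeas xi -> Kmeas eta ->
          act (fun w => xi w + eta w) x = act xi x + act eta x),
      (forall xi eta x, Kmeas xi -> Kmeas eta ->
          act (fun w => xi w * eta w) x = act xi (act eta x)),
      (forall x, act (fun _ => 1) x = x) &
      (forall xi eta x, Kmeas xi -> Kmeas eta ->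
          {ae P, forall w, xi w = eta w} -> act xi x = act eta x)].

Definition L0_seminorm (E : zmodType) (act : (T -> K) -> E -> E)
    (p : E -> T -> R) : Prop :=
  [/\ (forall x, measurable_fun setT (p x)),
      (forall x, {ae P, forall w, 0 <= p x w}),
      (forall x y, {ae P, forall w, p (x + y) w <= p x w + p y w}) &
      (forall xi x, Kmeas xi ->
          {ae P, forall w, p (act xi x) w = Knorm (xi w) * p x w})].

Definition L0_sup (F : set (T -> R)) (xi : T -> R) : Prop :=
  (forall eta, F eta -> {ae P, forall w, eta w <= xi w}) /\
  (forall zeta, measurable_fun setT zeta ->
      (forall eta, F eta -> {ae P, forall w, eta w <= zeta w}) ->
      {ae P, forall w, xi w <= zeta w}).

Definition RLC_module (E : zmodType) (act : (T -> K) -> E -> E)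
    (Pfam : set (E -> T -> R)) : Prop :=
  [/\ L0_module act,
      (forall p, Pfam p -> L0_seminorm act p) &
      (forall x, L0_sup [set p x | p in Pfam] (fun _ => 0) -> x = 0)].

Definition normQ (E : zmodType) (Q : seq (E -> T -> R)) (x : E) (w : T) : R :=
  \big[Num.max/0]_(p <- Q) p x w.

Definition eps_lambda_open (E : zmodType) (Pfam : set (E -> T -> R))
    (G : set E) : Prop :=
  forall x, G x -> exists (Q : seq (E -> T -> R)) (eps lam : R),
    [/\ Q <> [::], (forall p, List.In p Q -> Pfam p),
        0 < eps, 0 < lam < 1 &
        forall y, ((1 - lam)%:E < P [set w | (normQ Q y w < eps)%R])%E ->
          G (x + y)].

Definition Tc_open_L0 (G : set (T -> K)) : Prop :=
  forall xi, G xi -> Kmeas xi /\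
    exists eps : T -> R,
      [/\ measurable_fun setT eps, {ae P, forall w, 0 < eps w} &
          forall eta, Kmeas eta -> {ae P, forall w, Knorm (eta w) <= eps w} ->
            G (fun w => xi w + eta w)].

Definition L0_module_hom (E : zmodType) (act : (T -> K) -> E -> E)
    (f : E -> T -> K) : Prop :=
  [/\ (forall x, Kmeas (f x)),
      (forall x y, {ae P, forall w, f (x + y) w = f x w + f y w}) &
      (forall xi x, Kmeas xi -> {ae P, forall w, f (act xi x) w = xi w * f x w})].

Definition cont_epslam_Tc (E : zmodType) (Pfam : set (E -> T -> R))
    (f : E -> T -> K) : Prop :=
  forall G, Tc_open_L0 G -> eps_lambda_open Pfam (f @^-1` G).

End Defs.

Definition nonatomic (R : realType) (d : measure_display) (T : measurableType d)
    (P : probability T R) : Prop :=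
  ~ exists A : set T, [/\ measurable A, (0 < P A)%E &
      forall B, measurable B -> B `<=` A -> P B = 0%E \/ P (A `\` B) = 0%E].

(* Main.v *)
Require Import Defs.
From HB Require Import structures.
From mathcomp Require Import all_boot all_order all_algebra.
From mathcomp Require Import all_classical all_reals all_analysis.
From mathcomp Require Import complex.
From mathcomp Require Import measurable_realfun realfun lra.
Import Order.TTheory GRing.Theory Num.Theory.
Local Open Scope classical_set_scope.
Local Open Scope ring_scope.

Section Klemmas.
Context (R : realType).

Lemma KnormC (z : R[i]) : @Knorm R KComplex z = Normc.normc z.
Proof. by case: z. Qed.

Lemma Knorm0 k : Knorm (0 : Kt R k) = 0.
Proof. case: k; first exact: normr0. by rewrite (KnormC 0) Normc.normc0. Qed.

Lemma KnormD k (a b : Kt R k) : Knorm (a + b) <= Knorm a + Knorm b.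
Proof.
case: k a b => a b; first exact: ler_normD.
by rewrite !KnormC; exact: le_normcD.
Qed.

Lemma KnormMn k (a : Kt R k) n : Knorm (a *+ n) = Knorm a *+ n.
Proof.
case: k a => a; first exact: normrMn.
by rewrite !KnormC; exact: normcMn.
Qed.

Lemma Knorm_gt0 k (a : Kt R k) : a != 0 -> 0 < Knorm a.
Proof.
case: k a => a; first by rewrite normr_gt0.
move=> a0; rewrite KnormC lt_def; apply/andP; split.
  by apply/eqP => /Normc.eq0_normc; apply/eqP.
by case: a {a0} => x y /=; exact: sqrtr_ge0.
Qed.

Context (d : measure_display) (T : measurableType d).

Lemma Kmeas_add k (f g : T -> Kt R k) : Kmeas f -> Kmeas g ->
  Kmeas (fun w => f w + g w).
Proof.
case: k f g => /= f g.
  by move=> mf mg; exact: measurable_funD.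
move=> [mf1 mf2] [mg1 mg2]; split.
  have -> : (fun w => complex.Re (f w + g w)) = (fun w => complex.Re (f w)) \+ (fun w => complex.Re (g w)).
    by apply/funext => w /=; case: (f w) => ? ?; case: (g w).
  exact: measurable_funD.
have -> : (fun w => complex.Im (f w + g w)) = (fun w => complex.Im (f w)) \+ (fun w => complex.Im (g w)).
  by apply/funext => w /=; case: (f w) => ? ?; case: (g w).
exact: measurable_funD.
Qed.

Lemma Kmeas_norm k (f : T -> Kt R k) : Kmeas f ->
  measurable_fun setT (fun w => Knorm (f w)).
Proof.
case: k f => /= f mf.
  exact: measurableT_comp mf.
case: mf => m1 m2.
have -> : (fun w => @Knorm R KComplex (f w)) =
   (fun w => Num.sqrt ((complex.Re (f w)) ^+ 2 + (complex.Im (f w)) ^+ 2)).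
  by apply/funext => w; rewrite KnormC; case: (f w).
apply: measurableT_comp; first exact: continuous_measurable_fun (@sqrt_continuous R).
by apply: measurable_funD; apply: measurable_funX.
Qed.

Lemma Kmeas_ind k (A : set T) (c : Kt R k) : measurable A ->
  exists xi : T -> Kt R k, [/\ Kmeas xi, (forall w, A w -> xi w = c) &
                                   (forall w, ~ A w -> xi w = 0)].
Proof.
move=> mA; case: k c => /= c.
  exists (fun w => \1_A w * c); split.
  - by apply: measurable_funM => //; exact: measurable_indic.
  - by move=> w Aw; rewrite indicE mem_set // mul1r.
  - by move=> w nAw; rewrite indicE memNset // mul0r.
exists (fun w => @Complex R (\1_A w * complex.Re c) (\1_A w * complex.Im c)); split.
- by split => /=; apply: measurable_funM => //; exact: measurable_indic.
- by move=> w Aw; rewrite indicE mem_set // !mul1r; case: c.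
- by move=> w nAw; rewrite indicE memNset // !mul0r.
Qed.

End Klemmas.
Lemma geom_small (R : realType) (lam : R) : 0 < lam -> exists m : nat, (2^-1) ^+ m < lam.
Proof.
move=> lam0.
have li0 : 0 <= lam^-1 by rewrite invr_ge0 ltW.
exists (Num.Def.archi_bound lam^-1).
set m := Num.Def.archi_bound lam^-1.
have h1 := archi_boundP li0.
have h2 : (m%:R : R) <= (2 ^ m)%:R by rewrite ler_nat ltnW // ltn_expl.
rewrite exprVn -natrX invf_plt ?posrE ?ltr0n ?expn_gt0 //.
exact: lt_le_trans h1 h2.
Qed.

Lemma small_set (R : realType) d (T : measurableType d) (P : probability T R) :
  nonatomic P -> forall B, measurable B -> (0 < P B)%E ->
  forall lam : R, 0 < lam ->
  exists A, [/\ measurable A, A `<=` B, (0 < P A)%E & (P A < lam%:E)%E].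
Proof.
move=> NA B mB PB lam lam0.
have step : forall m : nat, exists A, [/\ measurable A, A `<=` B, (0 < P A)%E &
    (P A <= ((2^-1) ^+ m)%:E)%E].
  elim => [|m [A [mA AB PA0 PAm]]].
    by exists B; split => //; rewrite expr0; exact: probability_le1.
  have [C [mC CA PC PAC]] : exists C, [/\ measurable C, C `<=` A,
       P C <> 0%E & P (A `\` C) <> 0%E].
    apply: contrapT => H; apply: NA; exists A; split => // C mC CA.
    case: (pselect (P C = 0%E)) => [->|H1]; [by left|right].
    by apply: contrapT => H2; apply: H; exists C; split.
  have mAC : measurable (A `\` C) by exact: measurableD.
  have eA : P A = (P (A `\` C) + P C)%E.
    by rewrite (measureDI P mA mC) (setIidr CA).
  have fC := fin_num_measure P C mC.
  have fAC := fin_num_measure P (A `\` C) mAC.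
  have eC : P C = (fine (P C))%:E by rewrite fineK.
  have eAC : P (A `\` C) = (fine (P (A `\` C)))%:E by rewrite fineK.
  have gC : (0 <= fine (P C))%R by rewrite fine_ge0 // measure_ge0.
  have gAC : (0 <= fine (P (A `\` C)))%R by rewrite fine_ge0 // measure_ge0.
  move: eA PC PAC PAm gC gAC eC eAC.
  move: (fine (P C)) (fine (P (A `\` C))) => a b -> Pa Pb + a0 b0 eC eAC.
  rewrite eC eAC -EFinD lee_fin exprSr => hab.
  have a0' : 0 < a by rewrite lt_def a0 andbT; apply/eqP => a00; apply: Pa; rewrite eC a00.
  have b0' : 0 < b by rewrite lt_def b0 andbT; apply/eqP => b00; apply: Pb; rewrite eAC b00.
  have [leab|ltba] := leP a b.
  - exists C; split => //; first exact: subset_trans CA AB.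
      by rewrite eC lte_fin.
    rewrite eC lee_fin.
    lra.
  - exists (A `\` C); split => //.
      by move=> w [/AB].
      by rewrite eAC lte_fin.
    rewrite eAC lee_fin.
    lra.
have [m hm] := @geom_small _ lam lam0.
have [A [mA AB PA0 PAm]] := step m.
exists A; split => //.
by apply: le_lt_trans PAm _; rewrite lte_fin.
Qed.

Section Aux.
Context (R : realType) (d : measure_display) (T : measurableType d)
        (P : probability T R).

Lemma ae_list (X : Type) (Q : seq X) (Pr : X -> T -> Prop) :
  (forall p, List.In p Q -> {ae P, forall w, Pr p w}) ->
  {ae P, forall w, forall p, List.In p Q -> Pr p w}.
Proof.
elim: Q => [|q Q IH] H.
  by apply: aeW => w p [].
apply: filterS2 (H q (or_introl erefl)) (IH (fun p h => H p (or_intror h))).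
by move=> w h1 h2 p [<-|hp] //; exact: h2.
Qed.

Lemma normQ0 (E : zmodType) (Q : seq (E -> T -> R)) y w :
  (forall p, List.In p Q -> p y w = 0) -> normQ Q y w = 0.
Proof.
elim: Q => [|q Q IH] H; first by rewrite /normQ big_nil.
rewrite /normQ big_cons -/(normQ Q y w) IH; last by move=> p hp; apply: H; right.
by rewrite H; [exact: maxxx | left].
Qed.

Lemma normQ_meas (E : zmodType) (Q : seq (E -> T -> R)) y :
  (forall p, List.In p Q -> measurable_fun setT (p y)) ->
  measurable_fun setT (normQ Q y).
Proof.
elim: Q => [|q Q IH] H.
  have -> : normQ (T:=T) [::] y = cst (0:R).
    by apply: boolp.funext => w; rewrite /normQ big_nil.
  exact: measurable_cst.
have -> : normQ (T:=T) (q :: Q) y = (q y) \max (normQ Q y).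
  by apply: boolp.funext => w; rewrite /normQ big_cons.
apply: measurable_maxr; first by apply: H; left.
by apply: IH => p hp; apply: H; right.
Qed.

End Aux.

Theorem theorem1p2 (R : realType) (d : measure_display) (T : measurableType d)
    (P : probability T R) (k : scalarK) (E : zmodType)
    (act : (T -> Kt R k) -> E -> E) (Pfam : set (E -> T -> R))
    (f : E -> T -> Kt R k) :
  nonatomic P ->
  RLC_module P act Pfam ->
  L0_module_hom P act f ->
  cont_epslam_Tc P Pfam f ->
  forall x : E, {ae P, forall w, f x w = 0}.
Proof.
move=> NA [Hmod Hsemi Hsep] [fmeas fadd fact] Hcont x.
pose G := fun xi : T -> Kt R k => Kmeas xi /\
  exists r : R, r < 1 /\ {ae P, forall w, Knorm (xi w) <= r}.
have HG : Tc_open_L0 P G.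
  move=> xi [mxi [r [r1 hr]]]; split => //.
  exists (cst ((1 - r) / 2)); split.
  - exact: measurable_cst.
  - by apply: aeW => w /=; lra.
  - move=> eta meta heta; split; first exact: Kmeas_add.
    exists (r + (1 - r) / 2); split; first lra.
    apply: filterS2 hr heta => w h1 h2.
    apply: le_trans; first exact: KnormD. by apply: lerD.
have f00 : {ae P, forall w, f 0 w = 0}.
  apply: filterS (fadd 0 0) => w; rewrite addr0 => h.
  by have := congr1 (fun z => z - f 0 w) h; rewrite /= subrr addrK => <-.
have G0 : (f @^-1` G) 0.
  split; first exact: fmeas.
  exists 0; split; first lra.
  by apply: filterS f00 => w ->; rewrite Knorm0.
have [Q [eps [lam [Qne QP eps0 /andP[lam0 lam1] HQ]]]] := Hcont G HG 0 G0.
have key : forall y, ((1 - lam)%:E < P [set w | (normQ Q y w < eps)%R])%E ->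
    exists r : R, r < 1 /\ {ae P, forall w, Knorm (f y w) <= r}.
  by move=> y /HQ; rewrite add0r => -[_].
have Hn : forall n : nat,
    {ae P, forall w, Knorm (f x w) < (n.+1%:R)^-1}.
  move=> n.
  pose c : R := (n.+1%:R)^-1.
  pose Bn := [set w | c <= Knorm (f x w)].
  have mBn : measurable Bn.
    have -> : Bn = (fun w => Knorm (f x w)) @^-1` `[c, +oo[%classic.
      by apply/seteqP; split => w /=; rewrite in_itv /= andbT.
    rewrite -[X in measurable X]setTI.
    exact: (@Kmeas_norm _ _ _ _ _ (fmeas x) measurableT _ (measurable_itv `[c, +oo[)).
  apply: (negligibleS (A := Bn)).
    by move=> w /= /negP; rewrite -leNgt.
  apply/negligibleP => //.
  apply: contrapT => PBn.
  have PBn0 : (0 < P Bn)%E by rewrite lt_def measure_ge0 andbT; exact/eqP.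
  have [A [mA ABn PA0 PAl]] := @small_set _ _ _ P NA _ mBn PBn0 _ lam0.
  have [xi [mxi xiA xinA]] := @Kmeas_ind R d T k A (n.+1%:R : Kt R k) mA.
  pose y := act xi x.
  have claim1 : ((1 - lam)%:E < P [set w | (normQ Q y w < eps)%R])%E.
    have hall : {ae P, forall w, forall p, List.In p Q ->
        p y w = Knorm (xi w) * p x w}.
      apply: ae_list => p hp.
      by case: (Hsemi p (QP p hp)) => _ _ _ hom; exact: hom.
    have [N [mN PN0 NN]] := hall.
    pose S := [set w | (normQ Q y w < eps)%R].
    have mS : measurable S.
      have -> : S = normQ Q y @^-1` `]-oo, eps[%classic.
        by apply/seteqP; split => w; rewrite /= in_itv.
      rewrite -[X in measurable X]setTI; apply: normQ_meas => //.
        by move=> p hp; case: (Hsemi p (QP p hp)).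
    have sub : (~` A) `\` N `<=` S.
      move=> w [nA nN]; rewrite /S /= normQ0 // => p hp.
      have h : forall p, List.In p Q -> p y w = Knorm (xi w) * p x w.
        by apply: contrapT => h; apply: nN; apply: NN.
      by rewrite h // xinA // Knorm0 mul0r.
    have mC : measurable (~` A) := measurableC mA.
    have e := measureDI P mC mN.
    have z : P (~` A `&` N) = 0%E.
      by apply: (@subset_measure0 _ _ _ P _ N) => //; exact: measurableI.
    have eA : P (~` A `\` N) = (1 - P A)%E.
      by rewrite -probability_setC // e; move: z => /= ->; rewrite ?adde0 ?addr0.
    apply: (lt_le_trans _ (le_measure P _ _ sub)); rewrite ?inE //; last first.
      exact: measurableD.
    rewrite /=; move: eA => /= ->; rewrite -(fineK (fin_num_measure P A mA)) -EFinB lte_fin.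
    have : fine (P A) < lam by rewrite -lte_fin fineK // fin_num_measure.
    lra.
  have [r [r1 hr]] := key y claim1.
  have : P.-negligible A.
    have : {ae P, forall w, Knorm (f y w) <= r /\ f y w = xi w * f x w}.
      by apply: filterS2 hr (fact xi x mxi) => w h1 h2; split.
    move=> [N [mN PN AN]]; exists N; split => // w Aw; apply: AN => /= -[h1 h2].
    move: h1; rewrite h2 xiA // mulr_natl KnormMn => h1.
    have : 1 <= Knorm (f x w) *+ n.+1.
      have e1 : c *+ n.+1 = 1 by rewrite -(mulr_natr c) /c mulVf // pnatr_eq0.
      by rewrite -e1 lerMn2r ABn // orbT.
    by move=> h3; move: (le_trans h3 h1); rewrite leNgt r1.
  by move/(negligibleP _ mA) => PA; move: PA0; rewrite PA ltxx.
apply: filterS (ae_foralln Hn) => w hw.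
case: (eqVneq (f x w) 0) => // nz.
have kp := @Knorm_gt0 R k (f x w) nz.
have li0 : 0 <= (Knorm (f x w))^-1 by rewrite invr_ge0 ltW.
have hb := archi_boundP li0.
set m := Num.Def.archi_bound _ in hb.
have h1 : (Knorm (f x w))^-1 < m.+1%:R.
  by apply: lt_le_trans hb _; rewrite ler_nat.
move: h1; rewrite invf_plt ?posrE ?ltr0n // => h1.
by have := hw m; rewrite ltNge (ltW h1).
Qed.
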